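(* For every lazy expression $E$ and every nonempty polyhedron $C\subseteq\mathbb{R}^n$, the structurally defined bounds satisfy $\mathrm{LB}(E,C)\le\inf_{x\in C}[\![E]\!](x)\le\sup_{x\in C}[\![E]\!](x)\le\mathrm{UB}(E,C)$.
   Context: Lazy (scalar) expressions are generated by the grammar $E::=\mathtt{Affine}(w,b)\mid\mathtt{Sum}(\{E_1,\dots,E_k\})\mid\mathtt{Max}(\{E_1,\dots,E_k\})\mid\mathtt{Scale}(c,E)\mid\mathtt{Bias}(b,E)$ with $w\in\mathbb{R}^n$, $b,c\in\mathbb{R}$, and denote functions $\mathbb{R}^n\to\mathbb{R}$: $[\![\mathtt{Affine}(w,b)]\!](x)=w^\top x+b$, $[\![\mathtt{Sum}(\{E_i\})]\!]=\sum_i[\![E_i]\!]$, $[\![\mathtt{Max}(\{E_i\})]\!]=\max_i[\![E_i]\!]$, $[\![\mathtt{Scale}(c,E)]\!]=c[\![E]\!]$, $[\![\mathtt{Bias}(b,E)]\!]=[\![E]\!]+b$. A polyhedron is a finite intersection of closed halfspaces. The bounds (values in $\mathbb{R}\cup\{\pm\infty\}$, with $0\cdot(\pm\infty)=0$) are defined recursively: $\mathrm{LB}(\mathtt{Affine}(w,b),C)=\inf_{x\in C}(w^\top x+b)$, $\mathrm{UB}(\mathtt{Affine}(w,b),C)=\sup_{x\in C}(w^\top x+b)$; $\mathrm{LB}/\mathrm{UB}$ of $\mathtt{Sum}$ are the sums of the children's $\mathrm{LB}$/$\mathrm{UB}$; $\mathrm{LB}(\mathtt{Scale}(c,E),C)=c\,\mathrm{LB}(E,C)$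 if $c\ge0$ and $c\,\mathrm{UB}(E,C)$ if $c<0$, $\mathrm{UB}(\mathtt{Scale}(c,E),C)=c\,\mathrm{UB}(E,C)$ if $c\ge0$ and $c\,\mathrm{LB}(E,C)$ if $c<0$; $\mathrm{LB}/\mathrm{UB}(\mathtt{Bias}(b,E),C)=\mathrm{LB}/\mathrm{UB}(E,C)+b$; $\mathrm{LB}(\mathtt{Max}(\{E_i\}),C)=\max_i\mathrm{LB}(E_i,C)$, $\mathrm{UB}(\mathtt{Max}(\{E_i\}),C)=\max_i\mathrm{UB}(E_i,C)$. *)

(* Defs.v *)
From HB Require Import structures.
From mathcomp Require Import all_boot all_order all_algebra.
From mathcomp Require Import classical_sets reals constructive_ereal ereal.
Set Implicit Arguments. Unset Strict Implicit. Unset Printing Implicit Defensive.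
Import Order.TTheory GRing.Theory Num.Theory.
Local Open Scope classical_set_scope.
Local Open Scope ring_scope.

(* Children of Sum are given as a (finite) list; children of Max as a
   nonempty list (head + tail), since max over an empty set is undefined. *)
Inductive lexpr (R : realType) (n : nat) : Type :=
| Affine of 'cV[R]_n & R
| Sum of seq (lexpr R n)
| Max of lexpr R n & seq (lexpr R n)
| Scale of R & lexpr R n
| Bias of R & lexpr R n.

Arguments Affine {R n}.
Arguments Sum {R n}.
Arguments Max {R n}.
Arguments Scale {R n}.
Arguments Bias {R n}.

Definition dotv (R : realType) (n : nat) (w x : 'cV[R]_n) : R := (w^T *m x) 0 0.

Fixpoint lx_eval (R : realType) (n : nat) (E : lexpr R n) (x : 'cV[R]_n) : R :=
  match E with
  | Affine w b => dotv w x + b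
  | Sum es => foldr (fun e acc => lx_eval e x + acc) 0 es
  | Max e0 es => foldr (fun e acc => Num.max (lx_eval e x) acc) (lx_eval e0 x) es
  | Scale c e => c * lx_eval e x
  | Bias b e => lx_eval e x + b
  end.

Definition polyhedron (R : realType) (n : nat) (C : set 'cV[R]_n) : Prop :=
  exists (m : nat) (A : 'M[R]_(m, n)) (b : 'cV[R]_m),
    C = [set x | forall i : 'I_m, (A *m x) i 0 <= b i 0].

Local Open Scope ereal_scope.

(* Structural bounds (LB, UB) in \bar R; mathcomp's ereal multiplication
   satisfies 0 * (+-oo) = 0. *)
Fixpoint bounds (R : realType) (n : nat) (E : lexpr R n) (C : set 'cV[R]_n)
  : \bar R * \bar R :=
  match E with
  | Affine w b =>
      (ereal_inf [set (dotv w x + b)%R%:E | x in C],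
       ereal_sup [set (dotv w x + b)%R%:E | x in C])
  | Sum es =>
      foldr (fun e acc => let p := bounds e C in (p.1 + acc.1, p.2 + acc.2))
            (0, 0) es
  | Max e0 es =>
      foldr (fun e acc => let p := bounds e C in (maxe p.1 acc.1, maxe p.2 acc.2))
            (bounds e0 C) es
  | Scale c e =>
      let p := bounds e C in
      if (0 <= c)%R then (c%:E * p.1, c%:E * p.2) else (c%:E * p.2, c%:E * p.1)
  | Bias b e =>
      let p := bounds e C in (p.1 + b%:E, p.2 + b%:E)
  end.

Definition LB (R : realType) (n : nat) (E : lexpr R n) (C : set 'cV[R]_n) : \bar R :=
  (bounds E C).1.
Definition UB (R : realType) (n : nat) (E : lexpr R n) (C : set 'cV[R]_n) : \bar R :=
  (bounds E C).2.

(* Main.v *)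
Require Import Defs.
From HB Require Import structures.
From mathcomp Require Import all_boot all_order all_algebra.
From mathcomp Require Import classical_sets reals constructive_ereal ereal.
Import Order.TTheory GRing.Theory Num.Theory.
Local Open Scope classical_set_scope.
Local Open Scope ereal_scope.

Section Key.
Variables (R : realType) (n : nat) (C : set 'cV[R]_n) (x : 'cV[R]_n).
Hypothesis hx : C x.

Definition P (E : lexpr R n) : Prop :=
  (bounds E C).1 <= (lx_eval E x)%:E /\ (lx_eval E x)%:E <= (bounds E C).2.

Lemma P_sum_nil : P (Sum [::]).
Proof. by rewrite /P /=; split. Qed.

Lemma P_sum_cons e es : P e -> P (Sum es) -> P (Sum (e :: es)).
Proof.
move=> [h1 h2] [h3 h4].
change ((bounds e C).1 + (bounds (Sum es) C).1 <= (lx_eval e x + lx_eval (Sum es) x)%R%:E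
  /\ (lx_eval e x + lx_eval (Sum es) x)%R%:E <= (bounds e C).2 + (bounds (Sum es) C).2).
by rewrite EFinD; split; apply: leeD.
Qed.

Lemma P_max_cons e0 e es : P e -> P (Max e0 es) -> P (Max e0 (e :: es)).
Proof.
move=> [h1 h2] [h3 h4].
change (maxe (bounds e C).1 (bounds (Max e0 es) C).1 <= (Num.max (lx_eval e x) (lx_eval (Max e0 es) x))%:E
  /\ (Num.max (lx_eval e x) (lx_eval (Max e0 es) x))%:E <= maxe (bounds e C).2 (bounds (Max e0 es) C).2).
rewrite EFin_max; split.
- by apply: le_max2.
- by apply: le_max2.
Qed.

Lemma P_max_nil e0 : P e0 -> P (Max e0 [::]).
Proof. by []. Qed.

Lemma P_scale c e : P e -> P (Scale c e).
Proof.
move=> [h1 h2]; rewrite /P /=.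
case: (boolP (0 <= c)%R) => c0 /=; rewrite EFinM.
  by split; apply: lee_wpmul2l; rewrite ?lee_fin.
have nc : (0 <= - c)%R by rewrite oppr_ge0; apply/ltW; rewrite ltNge c0.
have E1 : forall y, c%:E * y = - ((- c)%:E * y).
  by move=> y; rewrite EFinN mulNe oppeK.
rewrite !E1 !leeN2.
by split; apply: lee_wpmul2l; rewrite ?lee_fin.
Qed.

Lemma P_bias b e : P e -> P (Bias b e).
Proof.
move=> [h1 h2]; rewrite /P /= EFinD.
by split; apply: leeD2r.
Qed.

Lemma P_affine w b : P (Affine w b).
Proof.
rewrite /P /=; split.
- by apply: ereal_inf_lbound; exists x.
- by apply: ereal_sup_ubound; exists x.
Qed.

Fixpoint key (E : lexpr R n) : P E :=
  match E with
  | Affine w b => P_affine w b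
  | Sum es => (fix aux (l : seq (lexpr R n)) : P (Sum l) :=
       match l with
       | [::] => P_sum_nil
       | e :: l' => P_sum_cons e l' (key e) (aux l')
       end) es
  | Max e0 es => (fix aux (l : seq (lexpr R n)) : P (Max e0 l) :=
       match l with
       | [::] => P_max_nil e0 (key e0)
       | e :: l' => P_max_cons e0 e l' (key e) (aux l')
       end) es
  | Scale c e => P_scale c e (key e)
  | Bias b e => P_bias b e (key e)
  end.

End Key.

Theorem mainTheorem6 (R : realType) (n : nat) (E : lexpr R n) (C : set 'cV[R]_n) :
  polyhedron C -> C !=set0 ->
  LB E C <= ereal_inf [set (lx_eval E x)%:E | x in C] /\
  ereal_inf [set (lx_eval E x)%:E | x in C] <= ereal_sup [set (lx_eval E x)%:E | x in C] /\
  ereal_sup [set (lx_eval E x)%:E | x in C] <= UB E C.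
Proof.
move=> _ [x0 hx0]; split; [|split].
- apply: le_ereal_inf_tmp => _ [x hx <-].
  by have [] := @key R n C x hx E.
- apply: (@le_trans _ _ (lx_eval E x0)%:E).
    by apply: ereal_inf_lbound; exists x0.
  by apply: ereal_sup_ubound; exists x0.
- apply: ge_ereal_sup => _ [x hx <-].
  by have [] := @key R n C x hx E.
Qed.
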